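(* Let $0<A<B$ and $h(t)=t\left(\frac{3-t}{2}\right)^2$. For $x>B/3$ define $$\rho(x)=\frac{\min\{h(t):t\in[A/x,B/x]\}}{\max\{h(t):t\in[A/x,B/x]\}} .$$ Then $\rho$ attains its maximum over $x\in(B/3,\infty)$ at $x=\frac13\left(A+\sqrt{AB}+B\right)$.
   Context: Interpretation: if a Gabor frame operator $S$ has spectrum $[A,B]$ and is rescaled to $S/x$, one step of the iteration $\gamma\mapsto\frac32\gamma-\frac12S_\gamma\gamma$ (with $S_\gamma$ the frame operator of $(\gamma,a,b)$) maps the spectrum via $h$, and $\rho(x)$ is the resulting ratio of smallest to largest frame bound. *)

(* Defs.v *)
From HB Require Import structures.
From mathcomp Require Import all_boot all_order all_algebra.
From mathcomp Require Import all_classical all_reals.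
Set Implicit Arguments. Unset Strict Implicit. Unset Printing Implicit Defensive.
Import Order.TTheory GRing.Theory Num.Theory.
Local Open Scope classical_set_scope.
Local Open Scope ring_scope.

Definition h {R : realType} (t : R) : R := t * ((3 - t) / 2) ^+ 2.

Definition hImage {R : realType} (A B x : R) : set R :=
  h @` [set t : R | A / x <= t <= B / x].

(* rho(x) = min of h on [A/x,B/x] / max of h on [A/x,B/x];
   h is continuous on a compact interval, so min = inf and max = sup. *)
Definition rho {R : realType} (A B x : R) : R :=
  inf (hImage A B x) / sup (hImage A B x).

(* Main.v *)
Require Import Defs.
From HB Require Import structures.
From mathcomp Require Import all_boot all_order all_algebra.
From mathcomp Require Import all_classical all_reals.
From mathcomp Require Import ring lra.
Import Order.TTheory GRing.Theory Num.Theory.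
Local Open Scope classical_set_scope.
Local Open Scope ring_scope.

Section S.
Variable R : realType.
Implicit Types a b s t r : R.

Lemma h_diff s t : h t - h s = (t - s) * (9 - 6*(t+s) + t^+2 + t*s + s^+2) / 4.
Proof. rewrite /h; field; by rewrite ?pnatr_eq0. Qed.

Lemma h_inc s t : 0 <= s -> s <= t -> t <= 1 -> h s <= h t.
Proof.
move=> s0 st t1; rewrite -subr_ge0 h_diff; apply: divr_ge0 => //.
apply: mulr_ge0; first lra.
have: 0 <= (1-t)*(1-s) by apply: mulr_ge0; lra.
have: 0 <= (t-1)^+2 + (s-1)^+2 by apply: addr_ge0; apply: sqr_ge0.
move=> H1 H2; nra.
Qed.

Lemma h_dec s t : 1 <= s -> s <= t -> t <= 3 -> h t <= h s.
Proof.
move=> s0 st t1; rewrite -subr_ge0.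
have -> : h s - h t = (t - s) * (- (9 - 6*(t+s) + t^+2 + t*s + s^+2)) / 4.
  rewrite /h; field; by rewrite ?pnatr_eq0.
apply: divr_ge0 => //.
apply: mulr_ge0; first lra.
have: (3-t)^+2 <= 2*(3-t) by rewrite expr2; apply: ler_wpM2r; lra.
have: (3-s)^+2 <= 2*(3-s) by rewrite expr2; apply: ler_wpM2r; lra.
have: 2*((3-t)*(3-s)) <= (3-t)^+2 + (3-s)^+2.
  have := sqr_ge0 (t - s); nra.
move=> H1 H2 H3; nra.
Qed.

Lemma h_le1 t : t <= 4 -> h t <= 1.
Proof.
move=> t4; rewrite -subr_ge0.
have -> : 1 - h t = (t-1)^+2 * (4 - t) / 4 by rewrite /h; field; by rewrite ?pnatr_eq0.
apply: divr_ge0 => //; apply: mulr_ge0; [exact: sqr_ge0|lra].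
Qed.

Lemma h_ge0 t : 0 <= t -> 0 <= h t.
Proof. move=> t0; rewrite /h; apply: mulr_ge0 => //; exact: sqr_ge0. Qed.

Lemma h_gt0 t : 0 < t -> t < 3 -> 0 < h t.
Proof. move=> t0 t3; rewrite /h; apply: mulr_gt0 => //; apply: exprn_gt0; lra. Qed.

Lemma h_mul r b : 0 <= r -> 0 <= b -> r <= 3 -> b <= 3 -> r * b <= 3 ->
  0 <= (r - 1) * (b - 1) -> h (r * b) <= h r * h b.
Proof.
move=> r0 b0 r3 b3 rb3 H; rewrite -subr_ge0.
have -> : h r * h b - h (r*b) = r*b/16 * (3*((r-1)*(b-1))) * ((3-r)*(3-b)+2*(3-r*b)).
  rewrite /h; field; by rewrite ?pnatr_eq0.
apply: mulr_ge0; last by apply: addr_ge0; [apply: mulr_ge0|]; lra.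
apply: mulr_ge0; last lra.
apply: divr_ge0 => //; exact: mulr_ge0.
Qed.

Definition Img a b := h @` [set t : R | a <= t <= b].

Lemma Img_lb a b : 0 <= a -> lbound (Img a b) 0.
Proof. move=> a0 y [t /andP[t1 t2] <-]; apply: h_ge0; lra. Qed.

Lemma Img_ub a b : b <= 3 -> ubound (Img a b) 1.
Proof. move=> b3 y [t /andP[t1 t2] <-]; apply: h_le1; lra. Qed.

Lemma Img_inf a b t : 0 <= a -> a <= t <= b -> inf (Img a b) <= h t.
Proof.
move=> a0 tin; apply: ge_inf; first by exists 0; exact: Img_lb.
by exists t.
Qed.

Lemma Img_sup a b t : b <= 3 -> a <= t <= b -> h t <= sup (Img a b).
Proof.
move=> b3 tin; apply: ub_le_sup; first by exists 1; exact: Img_ub.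
by exists t.
Qed.

Lemma Img_inf_ge0 a b : 0 <= a -> a <= b -> 0 <= inf (Img a b).
Proof.
move=> a0 ab; apply: lb_le_inf; last exact: Img_lb.
by exists (h a), a => //; apply/andP; split; lra.
Qed.

Lemma ratio_le i s c d : 0 <= i -> i <= c -> 0 < d -> d <= s -> i / s <= c / d.
Proof.
move=> i0 ic d0 ds.
have s0 : 0 < s by apply: lt_le_trans ds.
rewrite ler_pdivrMr // mulrAC ler_pdivlMr //.
apply: ler_pM => //; lra.
Qed.

Lemma rho_le a b c d : 0 <= a -> a <= b -> b <= 3 -> 0 < d ->
  (exists t, a <= t <= b /\ h t <= c) -> (exists t, a <= t <= b /\ d <= h t) ->
  inf (Img a b) / sup (Img a b) <= c / d.
Proof.
move=> a0 ab b3 d0 [t [tin tc]] [u [uin ud]].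
apply: ratio_le.
- exact: Img_inf_ge0.
- exact: le_trans (Img_inf _ _ _ a0 tin) tc.
- exact: d0.
- exact: le_trans ud (Img_sup _ _ _ b3 uin).
Qed.

End S.

Theorem mainTheorem10 (R : realType) (A B : R) (hA : 0 < A) (hAB : A < B) :
  let x0 := (A + Num.sqrt (A * B) + B) / 3 in
  B / 3 < x0 /\ (forall x : R, B / 3 < x -> rho A B x <= rho A B x0).
Proof.
move=> x0.
set s := Num.sqrt (A * B).
have AB0 : 0 <= A * B by apply: mulr_ge0; lra.
have s2 : s ^+ 2 = A * B by rewrite sqr_sqrtr.
have s0 : 0 <= s by apply: sqrtr_ge0.
have sA : A < s by nra.
have sB : s < B by nra.
have x0B3 : B / 3 < x0 by rewrite /x0 -/s; lra.
split => //.
have x0p : 0 < x0 by rewrite /x0 -/s; lra.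
have x0B : x0 < B by rewrite /x0 -/s; lra.
have Ax0 : A < x0 by rewrite /x0 -/s; lra.
set a0 := A / x0; set b0 := B / x0.
have Ha0 : a0 * x0 = A by rewrite /a0 divfK // gt_eqF.
have Hb0 : b0 * x0 = B by rewrite /b0 divfK // gt_eqF.
have a0p : 0 < a0 by rewrite /a0 divr_gt0.
have a01 : a0 < 1 by nra.
have b01 : 1 < b0 by nra.
have b03 : b0 < 3 by nra.
have Hab0 : h b0 = h a0.
  apply/eqP; rewrite -subr_eq0 h_diff.
  have -> : (9 - 6*(b0+a0) + b0^+2 + b0*a0 + a0^+2) = 0.
    have : (9 - 6*(b0+a0) + b0^+2 + b0*a0 + a0^+2) * x0 ^+ 2 = 0.
      transitivity (9 * x0^+2 - 6*(A+B)*x0 + A^+2 + A*B + B^+2).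
        rewrite -Ha0 -Hb0; ring.
      transitivity (s^+2 - A * B); last by rewrite s2 subrr.
      rewrite /x0 -/s; field; by rewrite ?pnatr_eq0.
    move/eqP; rewrite mulf_eq0 expf_eq0 /= (gt_eqF x0p) orbF.
    by move/eqP.
  by rewrite mulr0 mul0r.
have h1 : h 1 = 1 :> R by rewrite /h; field; rewrite ?pnatr_eq0.
have rx0 : rho A B x0 = h a0.
  rewrite /rho; change (hImage A B x0) with (Img R a0 b0).
  have -> : inf (Img R a0 b0) = h a0.
    apply/eqP; rewrite eq_le; apply/andP; split.
      apply: (@Img_inf R a0 b0 a0); first lra.
      apply/andP; split; lra.
    apply: lb_le_inf; first by exists (h a0), a0 => //; apply/andP; split; lra.
    move=> y [t /andP[t1 t2] <-].
    have [t1'|t1'] := leP t 1.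
      apply: h_inc => //; lra.
    rewrite -Hab0; apply: h_dec => //; lra.
  have -> : sup (Img R a0 b0) = 1.
    apply/eqP; rewrite eq_le; apply/andP; split.
      apply: ge_sup; first by exists (h a0), a0 => //; apply/andP; split; lra.
      apply: Img_ub; lra.
    rewrite -[X in X <= _]h1; apply: (@Img_sup R a0 b0 1); first lra.
    apply/andP; split; lra.
  by rewrite divr1.
rewrite rx0 => x Hx.
have xp : 0 < x by lra.
set a := A / x; set b := B / x.
have Ha : a * x = A by rewrite /a divfK // gt_eqF.
have Hb : b * x = B by rewrite /b divfK // gt_eqF.
have ap : 0 < a by rewrite /a divr_gt0.
have ab : a < b by nra.
have b3 : b < 3 by nra.
have -> : rho A B x = inf (Img R a b) / sup (Img R a b) by [].
have [xB|xB] := leP x B.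
  have b1 : 1 <= b by nra.
  have [x0x|x0x] := leP x0 x.
    rewrite -[h a0]divr1; apply: rho_le; try lra.
      exists a; split; first by apply/andP; split; nra.
      apply: h_inc; nra.
    exists 1; split; first by apply/andP; split; nra.
    by rewrite h1.
  have [Ax|Ax] := leP A x.
    rewrite -[h a0]divr1; apply: rho_le; try lra.
      exists b; split; first by apply/andP; split; nra.
      rewrite -Hab0; apply: h_dec; nra.
    exists 1; split; first by apply/andP; split; nra.
    by rewrite h1.
  set r := B / A.
  have Hr : r * A = B by rewrite /r divfK // gt_eqF.
  have Hbr : b = r * a by rewrite /b /r /a mulrA divfK // gt_eqF.
  have a1 : 1 < a by nra.
  have r1 : 1 < r by nra.
  have r3 : r <= 3 by nra.
  have hap : 0 < h a by apply: h_gt0; lra.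
  apply: (@le_trans _ _ (h b / h a)).
    apply: rho_le; try lra.
      exists b; split; first by apply/andP; split; nra.
      by [].
    exists a; split; first by apply/andP; split; nra.
    by [].
  rewrite ler_pdivrMr //.
  apply: (le_trans (y := h r * h a)).
    rewrite Hbr; apply: h_mul; nra.
  apply: ler_wpM2r; first lra.
  rewrite -Hab0; apply: h_dec; try lra.
  nra.
set r := A / B.
have Bp : 0 < B by lra.
have Hr : r * B = A by rewrite /r divfK // gt_eqF.
have Har : a = r * b by rewrite /b /r /a mulrA divfK // gt_eqF.
have b1 : b < 1 by nra.
have rp : 0 < r by rewrite /r divr_gt0.
have r1 : r < 1 by nra.
have hbp : 0 < h b by apply: h_gt0; lra.
apply: (@le_trans _ _ (h a / h b)).
  apply: rho_le; try lra.
    exists a; split; first by apply/andP; split; nra.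
    by [].
  exists b; split; first by apply/andP; split; nra.
  by [].
rewrite ler_pdivrMr //.
apply: (le_trans (y := h r * h b)).
  rewrite Har; apply: h_mul; nra.
apply: ler_wpM2r; first lra.
apply: h_inc; nra.
Qed.
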